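(* Let $A\in\mathbb{R}^{n\times n}$ and $C_i\in\mathbb{R}^{s_i\times n}$, $i\in\{1,\dots,m\}$, be such that $(C,A)$ is observable, where $C=\begin{bmatrix}C_1^\top&\cdots&C_m^\top\end{bmatrix}^\top$, and suppose the neighbor graph $\mathbb{N}$ is strongly connected. Let $\tilde A=I_m\otimes A$, $B_i=b_i\otimes I_n$ ($b_i$ the $i$-th unit vector of $\mathbb{R}^m$), $C_{ii}=C_iB_i^\top$, and $C_{ij}=c_{ij}\otimes I_n$ for $j\in\mathcal{N}_i$, $j\neq i$, where $c_{ij}\in\mathbb{R}^{1\times m}$ has entry $-1$ in position $i$, $+1$ in position $j$ and zeros elsewhere. Then the multi-channel system $$\dot\epsilon=\tilde A\epsilon+\sum_{i=1}^m\sum_{j\in\mathcal{N}_i}B_iu_{ij},\qquad y_{ij}=C_{ij}\epsilon,\quad ij\in\mathcal{I}=\{ij:i\in\{1,\dots,m\},\ j\in\mathcal{N}_i\},$$ in which channel $ij$ has input matrix $B_i$ and output matrix $C_{ij}$, is jointly controllable and jointly observable.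
   Context: Agents $1,\dots,m$ have neighbor sets $\mathcal{N}_i\ni i$; the neighbor graph $\mathbb{N}$ is the directed graph on $\{1,\dots,m\}$ with an arc from $j$ to $i$ whenever $j\in\mathcal{N}_i$, $j\neq i$, and $c_{ij}$ is the row of the transpose of its incidence matrix corresponding to that arc. A multi-channel system is jointly controllable (resp. jointly observable) if the pair consisting of $\tilde A$ and the block row of all input matrices is controllable (resp. the block column of all output matrices together with $\tilde A$ is observable). *)

(* Defs.v *)
From mathcomp Require Import all_boot all_order all_algebra.
From mathcomp Require Export mxtens.
Set Implicit Arguments. Unset Strict Implicit. Unset Printing Implicit Defensive.
Import GRing.Theory Num.Theory.
Local Open Scope ring_scope.

Section Defs.
Variable R : fieldType.

Fixpoint ctrbk (N q : nat) (A : 'M[R]_N) (B : 'M[R]_(N, q)) (k : nat)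
  : 'M[R]_(N, k * q) :=
  match k return 'M[R]_(N, k * q) with
  | 0 => 0
  | k'.+1 => row_mx B (A *m ctrbk A B k')
  end.

Fixpoint obsvk (N p : nat) (C : 'M[R]_(p, N)) (A : 'M[R]_N) (k : nat)
  : 'M[R]_(k * p, N) :=
  match k return 'M[R]_(k * p, N) with
  | 0 => 0
  | k'.+1 => col_mx C (obsvk C A k' *m A)
  end.

Definition controllable (N q : nat) (A : 'M[R]_N) (B : 'M[R]_(N, q)) : bool :=
  \rank (ctrbk A B N) == N.

Definition observable (N p : nat) (C : 'M[R]_(p, N)) (A : 'M[R]_N) : bool :=
  \rank (obsvk C A N) == N.

Fixpoint blockrow (N : nat) (l : seq {q : nat & 'M[R]_(N, q)})
  : 'M[R]_(N, sumn (map tag l)) :=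
  match l return 'M[R]_(N, sumn (map tag l)) with
  | [::] => 0
  | x :: l' => row_mx (tagged x) (blockrow l')
  end.

Fixpoint blockcol (N : nat) (l : seq {p : nat & 'M[R]_(p, N)})
  : 'M[R]_(sumn (map tag l), N) :=
  match l return 'M[R]_(sumn (map tag l), N) with
  | [::] => 0
  | x :: l' => col_mx (tagged x) (blockcol l')
  end.

Section System.
Variables (m n : nat) (A : 'M[R]_n) (s : 'I_m -> nat) (Cs : forall i, 'M[R]_(s i, n))
  (Nb : 'I_m -> {set 'I_m}).

Definition Cstack : 'M[R]_(_, n) := blockcol [seq Tagged (fun p => 'M[R]_(p, n)) (Cs i) | i <- enum 'I_m].

Definition Atil : 'M[R]_(m * n) := (1%:M : 'M[R]_m) *t A.

Definition bvec (i : 'I_m) : 'M[R]_(m, 1) := delta_mx i 0.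

Definition Bi (i : 'I_m) : 'M[R]_(m * n, n) :=
  castmx (erefl, mul1n n) (bvec i *t (1%:M : 'M[R]_n)).

Definition cvec (i j : 'I_m) : 'rV[R]_m := delta_mx 0 j - delta_mx 0 i.

Definition Cij (i j : 'I_m) : {p : nat & 'M[R]_(p, m * n)} :=
  if j == i then Tagged (fun p => 'M[R]_(p, m * n)) (Cs i *m (Bi i)^T)
  else Tagged (fun p => 'M[R]_(p, m * n)) (cvec i j *t (1%:M : 'M[R]_n)).

Definition channels : seq ('I_m * 'I_m) :=
  [seq (i, j) | i <- enum 'I_m, j <- [seq j <- enum 'I_m | j \in Nb i]].

Definition Bjoint : 'M[R]_(m * n, _) :=
  blockrow [seq Tagged (fun q => 'M[R]_(m * n, q)) (Bi ij.1) | ij <- channels].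

Definition Cjoint : 'M[R]_(_, m * n) :=
  blockcol [seq Cij ij.1 ij.2 | ij <- channels].

Definition nbr_arc : rel 'I_m := fun j i => (j \in Nb i) && (j != i).

Definition strongly_connected : Prop := forall i j : 'I_m, connect nbr_arc i j.

End System.
End Defs.

(* Main.v *)
Require Import Defs.
From mathcomp Require Import all_boot all_order all_algebra.
Set Implicit Arguments. Unset Strict Implicit. Unset Printing Implicit Defensive.
Import GRing.Theory.
Local Open Scope ring_scope.

Section Aux.
Variable R : fieldType.

Lemma rank_of_rowinj p N (M : 'M[R]_(N, p)) :
  (forall u : 'rV_N, u *m M = 0 -> u = 0) -> \rank M = N.
Proof.
move=> H; apply/eqP; change (row_free M); rewrite -kermx_eq0; apply/eqP/row_matrixP => i.
rewrite row0; apply: H; apply/sub_kermxP; exact: row_sub.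
Qed.

Lemma rank_of_colinj p N (M : 'M[R]_(p, N)) :
  (forall v : 'cV_N, M *m v = 0 -> v = 0) -> \rank M = N.
Proof.
move=> H; rewrite -mxrank_tr; apply: rank_of_rowinj => u Hu.
apply: trmx_inj; rewrite trmx0; apply: H.
by rewrite -[M]trmxK -trmx_mul Hu trmx0.
Qed.

Lemma colinj_of_rank p N (M : 'M[R]_(p, N)) :
  \rank M = N -> forall v : 'cV_N, M *m v = 0 -> v = 0.
Proof.
move=> Hr v Hv; have fr : row_free M^T by rewrite /row_free mxrank_tr Hr.
apply: trmx_inj; rewrite trmx0; apply/eqP.
by rewrite -(mulmx_free_eq0 _ fr) -trmx_mul Hv trmx0.
Qed.

Lemma obsvk_eq0 N p (C : 'M[R]_(p, N)) (A : 'M[R]_N) k (v : 'cV_N) :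
  obsvk C A k *m v = 0 <-> forall t, (t < k)%N -> C *m iter t (mulmx A) v = 0.
Proof.
elim: k v => [|k IH] v /=.
  by split=> // _; rewrite mul0mx.
rewrite mul_col_mx -mulmxA; split.
  move/eqP; rewrite col_mx_eq0 => /andP[/eqP h1 /eqP /IH h2] [|t] lt; first exact: h1.
  by rewrite iterSr; apply: h2.
move=> H; apply/eqP; rewrite col_mx_eq0; apply/andP; split; apply/eqP.
  exact: (H 0%N).
by apply/IH => t lt; rewrite -iterSr; apply: H.
Qed.

Lemma ctrbk_eq0 N q (A : 'M[R]_N) (B : 'M[R]_(N, q)) k (u : 'rV_N) :
  (0 < k)%N -> u *m ctrbk A B k = 0 -> u *m B = 0.
Proof.
case: k => // k _ /=; rewrite mul_mx_row => /eqP; rewrite row_mx_eq0.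
by case/andP=> /eqP.
Qed.

Lemma blockrow_eq0 N (T : eqType) (l : seq T) (f : T -> {q : nat & 'M[R]_(N, q)})
  (u : 'rV_N) : u *m blockrow (map f l) = 0 -> forall t, t \in l -> u *m tagged (f t) = 0.
Proof.
elim: l => [|x l IH] //= H t; rewrite inE.
move: H; rewrite mul_mx_row => /eqP; rewrite row_mx_eq0 => /andP[/eqP h1 /eqP h2].
by case/orP=> [/eqP -> //|]; apply: IH.
Qed.

Lemma blockcol_eq0 N (T : eqType) (l : seq T) (f : T -> {p : nat & 'M[R]_(p, N)})
  (v : 'cV_N) : blockcol (map f l) *m v = 0 <-> forall t, t \in l -> tagged (f t) *m v = 0.
Proof.
elim: l => [|x l IH] /=; first by split=> // _; rewrite mul0mx.
rewrite mul_col_mx; split.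
  move/eqP; rewrite col_mx_eq0 => /andP[/eqP h1 /eqP /IH h2] t.
  by rewrite inE; case/orP=> [/eqP -> //|]; apply: h2.
move=> H; apply/eqP; rewrite col_mx_eq0; apply/andP; split; apply/eqP.
  by apply: H; rewrite inE eqxx.
by apply/IH => t lt; apply: H; rewrite inE lt orbT.
Qed.

Lemma connect_eq (T : finType) (e : rel T) (U : Type) (P : T -> U) :
  (forall a b, e a b -> P a = P b) -> forall a b, connect e a b -> P a = P b.
Proof.
move=> He a b /connectP [p pth ->]; elim: p a pth => [|x p IH] a //= /andP[h1 h2].
by rewrite (He _ _ h1); apply: IH.
Qed.

End Aux.
Section Tens.
Variable R : fieldType.
Variables m n : nat.

Definition blk (X : 'cV[R]_(m * n)) (i : 'I_m) : 'cV[R]_n :=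
  \col_k X (mxtens_index (i, k)) 0.

Lemma blk_eq0 X : (forall i, blk X i = 0) -> X = 0.
Proof.
move=> H; apply/matrixP => r c; rewrite [c]ord1; case: (mxtens_indexP r) => i k.
by have := congr1 (fun M : 'cV_n => M k 0) (H i); rewrite !mxE.
Qed.

Lemma sum_idx (F : 'I_(m * n) -> R) :
  \sum_r F r = \sum_(j < m) \sum_(l < n) F (mxtens_index (j, l)).
Proof.
rewrite pair_big /= (reindex (@mxtens_index m n)) /=.
  by apply: eq_bigr => -[a b].
by exists (@mxtens_unindex m n) => x _; rewrite (mxtens_indexK, mxtens_unindexK).
Qed.

Lemma blk_Atil (A : 'M[R]_n) X i : blk (Atil m A *m X) i = A *m blk X i.
Proof.
apply/matrixP => k c; rewrite [c]ord1 !mxE sum_idx (bigD1 i) //= [X in _ + X]big1 ?addr0.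
  by apply: eq_bigr => l _; rewrite /Atil tensmxE !mxE eqxx mul1r.
move=> j ji; apply: big1 => l _.
have ij : (i == j) = false by rewrite eq_sym (negbTE ji).
by rewrite /Atil tensmxE !mxE ij !mul0r.
Qed.

Lemma blk_iter (A : 'M[R]_n) X i t :
  blk (iter t (mulmx (Atil m A)) X) i = iter t (mulmx A) (blk X i).
Proof. by elim: t => //= t IH; rewrite blk_Atil IH. Qed.

Lemma Bi_entry (i j : 'I_m) (l k : 'I_n) :
  Bi R n i (mxtens_index (j, l)) k = ((j == i) && (l == k))%:R.
Proof.
rewrite castmxE cast_ord_id.
have -> : cast_ord (esym (mul1n n)) k = mxtens_index (ord0, k).
  by apply: val_inj; rewrite /= mul0n add0n.
rewrite tensmxE !mxE andbT.
by case: (j == i); case: (l == k); rewrite ?mul1r ?mul0r.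
Qed.

Lemma BiT X i : (Bi R n i)^T *m X = blk X i.
Proof.
apply/matrixP => k c; rewrite [c]ord1 !mxE sum_idx (bigD1 i) //= [X in _ + X]big1 ?addr0.
  rewrite (bigD1 k) //= [X in _ + X]big1 ?addr0.
    by rewrite !mxE Bi_entry !eqxx mul1r.
  by move=> l lk; rewrite !mxE Bi_entry (negbTE lk) andbF mul0r.
move=> j ji; apply: big1 => l _.
by rewrite !mxE Bi_entry (negbTE ji) mul0r.
Qed.

Lemma Cij_off X i j : (cvec R i j *t (1%:M : 'M[R]_n)) *m X = 0 -> blk X j = blk X i.
Proof.
move=> H; apply/matrixP => k c; rewrite [c]ord1.
have := congr1 (fun M : 'M[R]_(1 * n, 1) => M (mxtens_index (ord0, k)) 0) H; rewrite !mxE sum_idx.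
have E : forall a, \sum_(l < n) (cvec R i j *t (1%:M : 'M[R]_n)) (mxtens_index (ord0, k))
          (mxtens_index (a, l)) * X (mxtens_index (a, l)) 0
     = (cvec R i j) 0 a * X (mxtens_index (a, k)) 0.
  move=> a; rewrite (bigD1 k) //= [X in _ + X]big1 ?addr0.
    by rewrite tensmxE !mxE eqxx mulr1.
  move=> l lk; have kl : (k == l) = false by rewrite eq_sym (negbTE lk).
  by rewrite tensmxE !mxE kl mulr0 mul0r.
under eq_bigr do rewrite E.
rewrite /cvec.
under eq_bigr do rewrite !mxE mulrBl.
have S1 : forall (b : 'I_m) (F : 'I_m -> R), \sum_a (a == b)%:R * F a = F b.
  move=> b F; rewrite (bigD1 b) //= big1 ?addr0 ?eqxx ?mul1r //.
  by move=> a ab; rewrite (negbTE ab) mul0r.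
by rewrite sumrB !S1 => /eqP; rewrite subr_eq0 => /eqP.
Qed.

End Tens.

Theorem lemma4 (R : realFieldType) (m n : nat) (A : 'M[R]_n)
  (s : 'I_m -> nat) (Cs : forall i : 'I_m, 'M[R]_(s i, n))
  (Nb : 'I_m -> {set 'I_m}) :
  (forall i : 'I_m, i \in Nb i) ->
  observable (Cstack Cs) A ->
  strongly_connected Nb ->
  controllable (Atil m A) (Bjoint R n Nb) /\ observable (Cjoint Cs Nb) (Atil m A).
Proof.
move=> Hself Hobs Hsc.
have Hmem : forall i j : 'I_m, j \in Nb i -> (i, j) \in channels Nb.
  move=> i j hj; rewrite /channels.
  apply/flattenP; exists [seq (i, y) | y <- [seq y <- enum 'I_m | y \in Nb i]].
    by apply/mapP; exists i; rewrite ?mem_enum.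
  by apply/mapP; exists j => //; rewrite mem_filter hj mem_enum.
have pos : forall (i : 'I_m) (k : 'I_n), (0 < m * n)%N.
  move=> i k; rewrite muln_gt0; apply/andP; split.
    exact: (leq_ltn_trans (leq0n _) (ltn_ord i)).
  exact: (leq_ltn_trans (leq0n _) (ltn_ord k)).
split.
  rewrite /controllable; apply/eqP; apply: rank_of_rowinj => u Hu.
  apply: trmx_inj; rewrite trmx0; apply: blk_eq0 => i.
  apply/matrixP => k c.
  have Hb := ctrbk_eq0 (pos i k) Hu.
  have := @blockrow_eq0 _ _ _ _ (fun ij : 'I_m * 'I_m => Tagged (fun q => 'M[R]_(m * n, q)) (Bi R n ij.1)) _
    Hb (i, i) (Hmem i i (Hself i)) => /= h.
  have : blk u^T i = 0 by rewrite -BiT -trmx_mul h trmx0.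
  by move=> ->.
rewrite /observable; apply/eqP; apply: rank_of_colinj => v Hv.
have Ht := (obsvk_eq0 _ _ _ _).1 Hv.
have Hch : forall t, (t < m * n)%N -> forall i j, j \in Nb i ->
    tagged (Cij Cs i j) *m iter t (mulmx (Atil m A)) v = 0.
  move=> t lt i j hj.
  have := (@blockcol_eq0 _ _ _ _ (fun ij : 'I_m * 'I_m => Cij Cs ij.1 ij.2) _).1 (Ht t lt).
  by move=> /(_ (i, j) (Hmem i j hj)).
apply: blk_eq0 => i0; apply/matrixP => k c.
have p0 := pos i0 k.
have Harc : forall a b, nbr_arc Nb a b -> blk v a = blk v b.
  move=> a b /andP[hab nab].
  have := Hch 0%N p0 b a hab; rewrite /Cij (negbTE nab) /=.
  exact: Cij_off.
have Eq : forall i, blk v i = blk v i0.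
  by move=> i; apply: (connect_eq Harc); apply: Hsc.
have He : blk v i0 = 0.
  apply: (colinj_of_rank (eqP Hobs)); apply/(obsvk_eq0 _ _ _ _) => t lt.
  apply/(@blockcol_eq0 _ _ _ _ (fun i => Tagged (fun p => 'M[R]_(p, n)) (Cs i))) => i _ /=.
  have lt' : (t < m * n)%N.
    apply: (leq_trans lt); rewrite leq_pmull //.
    exact: (leq_ltn_trans (leq0n _) (ltn_ord i0)).
  have := Hch t lt' i i (Hself i); rewrite /Cij eqxx /=.
  by rewrite -mulmxA BiT blk_iter Eq.
by rewrite He.
Qed.
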